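(* Let $k\ge 4$ be an integer and let $f_k(X)=X^k-X^{k-1}-\cdots-X-1$. Let $\alpha_k$ denote the unique root of $f_k$ with $|\alpha_k|>1$ (it is real and greater than $1$), and let $\rho_1>\rho_2>\cdots>\rho_K$ be the distinct absolute values of the remaining roots of $f_k$ (all of which lie inside the unit disk). Then $$\frac{\rho_i}{\rho_j}>1+\frac{1}{10\,k^{9.6}\,(\pi/e)^k}\qquad\text{for all }1\le i<j\le K.$$
   Context: $f_k(X)=X^k-X^{k-1}-\cdots-X-1$ is the characteristic polynomial of the $k$-generalized Fibonacci sequence. It has exactly one root outside the closed unit disk, which is real and larger than $1$; all other roots have absolute value less than $1$. *)

(* Defs.v *)
From Stdlib Require Import Reals.
From Coquelicot Require Import Coquelicot.
Open Scope R_scope.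

Fixpoint geom_sum (z : C) (n : nat) : C :=
  match n with
  | O => RtoC 0
  | S m => Cplus (geom_sum z m) (Cpow z m)
  end.

Definition fk_eval (k : nat) (z : C) : C :=
  Cminus (Cpow z k) (geom_sum z k).

Definition is_root_fk (k : nat) (z : C) : Prop := fk_eval k z = RtoC 0.

(* Main.v *)
Require Import Defs.
From Stdlib Require Import Reals Lra Psatz Lia.
From Coquelicot Require Import Coquelicot.
Open Scope R_scope.

Lemma geom_id (z : C) (n : nat) :
  Cmult (Cminus z (RtoC 1)) (geom_sum z n) = Cminus (Cpow z n) (RtoC 1).
Proof.
  induction n as [|n IH]; simpl.
  - apply injective_projections; simpl; ring.
  - rewrite Cmult_plus_distr_l, IH. ring.
Qed.

Lemma root_rel (k : nat) (z : C) : is_root_fk k z ->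
  Cmult (Cpow z k) (Cminus (RtoC 2) z) = RtoC 1.
Proof.
  unfold is_root_fk, fk_eval; intro H.
  assert (E : Cmult (Cpow z k) (Cminus (RtoC 2) z) =
    Cminus (Cminus (RtoC 1) (Cmult (Cminus z (RtoC 1)) (Cminus (Cpow z k) (geom_sum z k))))
      (Cminus (Cmult (Cminus z (RtoC 1)) (geom_sum z k)) (Cminus (Cpow z k) (RtoC 1)))).
  { apply injective_projections; simpl; ring. }
  rewrite E, H, geom_id. apply injective_projections; simpl; ring.
Qed.

Lemma Cmod_2m (z : C) : Cmod (Cminus (RtoC 2) z) <= 2 + Cmod z.
Proof.
  unfold Cminus. eapply Rle_trans. apply Cmod_triangle.
  rewrite Cmod_opp, Cmod_R, Rabs_pos_eq by lra. lra.
Qed.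

Lemma pow_le1 (x : R) (n : nat) : 0 <= x <= 1 -> x ^ n <= 1.
Proof. intros H; induction n; simpl; [lra|]. nra. Qed.

Lemma pow_diff (z w : C) (m : nat) : Cmod z <= 1 -> Cmod w <= 1 ->
  Cmod (Cminus (Cpow z m) (Cpow w m)) <= INR m * Cmod (Cminus z w).
Proof.
  intros Hz Hw. induction m as [|m IH].
  - simpl. replace (Cminus 1 1) with (RtoC 0) by (apply injective_projections; simpl; ring).
    rewrite Cmod_0. lra.
  - assert (E : Cminus (Cpow z (S m)) (Cpow w (S m)) =
      Cplus (Cmult z (Cminus (Cpow z m) (Cpow w m))) (Cmult (Cpow w m) (Cminus z w))).
    { simpl. ring. }
    rewrite E. eapply Rle_trans. apply Cmod_triangle.
    rewrite !Cmod_mult, Cmod_pow, S_INR.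
    pose proof (Cmod_ge_0 z). pose proof (Cmod_ge_0 w).
    pose proof (Cmod_ge_0 (Cminus z w)).
    pose proof (Cmod_ge_0 (Cminus (Cpow z m) (Cpow w m))).
    pose proof (pow_le1 (Cmod w) m ltac:(lra)).
    pose proof (pow_le (Cmod w) m ltac:(lra)).
    nra.
Qed.

Lemma F_bound (z w : C) (m : nat) : Cmod z <= 1 -> Cmod w <= 1 ->
  Cmod (Cminus (Cminus (Cpow z (S m)) (Cpow w (S m)))
     (Cmult (Cmult (RtoC (INR (S m))) (Cpow z m)) (Cminus z w)))
   <= INR m ^ 2 * Cmod (Cminus z w) ^ 2.
Proof.
  intros Hz Hw. induction m as [|m IH].
  - simpl. replace (Cminus (Cminus (Cmult z 1) (Cmult w 1)) (Cmult (Cmult (RtoC 1) 1) (Cminus z w))) with (RtoC 0)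
      by (apply injective_projections; simpl; ring).
    rewrite Cmod_0. lra.
  - set (E := Cminus (Cminus (Cpow z (S m)) (Cpow w (S m)))
     (Cmult (Cmult (RtoC (INR (S m))) (Cpow z m)) (Cminus z w))) in *.
    assert (Eq : Cminus (Cminus (Cpow z (S (S m))) (Cpow w (S (S m))))
     (Cmult (Cmult (RtoC (INR (S (S m)))) (Cpow z (S m))) (Cminus z w)) =
     Cplus (Cmult z E) (Cmult (Cminus (Cpow w (S m)) (Cpow z (S m))) (Cminus z w))).
    { unfold E. rewrite (S_INR (S m)), RtoC_plus. simpl. ring. }
    rewrite Eq. eapply Rle_trans. apply Cmod_triangle.
    rewrite !Cmod_mult.
    pose proof (pow_diff w z (S m) Hw Hz) as PD.
    assert (Cmod (Cminus w z) = Cmod (Cminus z w)) as Hs.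
    { replace (Cminus w z) with (Copp (Cminus z w)) by ring. apply Cmod_opp. }
    rewrite Hs in PD.
    pose proof (Cmod_ge_0 z). pose proof (Cmod_ge_0 E).
    pose proof (Cmod_ge_0 (Cminus z w)).
    pose proof (pos_INR m). rewrite S_INR in *.
    set (d := Cmod (Cminus z w)) in *.
    set (X := Cmod (Cminus (Cpow w (S m)) (Cpow z (S m)))) in *.
    assert (Cmod z * Cmod E <= Cmod E) by nra.
    assert (X * d <= (INR m + 1) * d * d) by nra.
    nra.
Qed.



Lemma pow_mvt (r s : R) (n : nat) : 0 <= s <= r ->
  r ^ S n - s ^ S n <= INR (S n) * r ^ n * (r - s).
Proof.
  intros H. induction n as [|n IH].
  - simpl. lra.
  - assert (E : r ^ S (S n) - s ^ S (S n) = r * (r ^ S n - s ^ S n) + s ^ S n * (r - s))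
      by (simpl; ring).
    rewrite E. rewrite S_INR.
    pose proof (pow_incr s r (S n) H).
    assert (r * (r ^ S n - s ^ S n) <= r * (INR (S n) * r ^ n * (r - s))) by
      (apply Rmult_le_compat_l; lra).
    assert (s ^ S n * (r - s) <= r ^ S n * (r - s)) by (apply Rmult_le_compat_r; lra).
    simpl in *. nra.
Qed.

Lemma geo (k : nat) (r s a b c e Gz Gw : R) : (1 <= k)%nat ->
  3/4 <= r <= 1 -> 0 < s < r ->
  r^2 = a^2 + b^2 -> s^2 = c^2 + e^2 ->
  Gz = (2-a)^2 + b^2 -> Gw = (2-c)^2 + e^2 ->
  r^(2*k) * Gz = 1 -> s^(2*k) * Gw = 1 -> 0 <= b * e -> Gw <= 9 ->
  (a-c)^2 + (b-e)^2 <= 65 * INR k ^ 2 * (r - s).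
Proof.
  intros Hk Hr Hs Hr2 Hs2 HGz HGw Hrz Hsw Hbe HG9.
  apply le_INR in Hk. simpl in Hk.
  set (d := r - s).
  assert (HGzw : Gw - Gz = Gw * Gz * (r^(2*k) - s^(2*k))).
  { transitivity (Gw * (r^(2*k) * Gz) - Gz * (s^(2*k) * Gw)). rewrite Hrz, Hsw; ring. ring. }
  destruct k as [|k']; [simpl in Hk; lra|].
  replace (2 * S k')%nat with (S (2 * k' + 1)) in * by lia.
  pose proof (pow_mvt r s (2*k'+1) ltac:(lra)) as MV.
  set (q := r ^ (2*k'+1)) in *.
  assert (Hq : r ^ S (2*k'+1) = r * q) by (simpl; reflexivity).
  rewrite Hq in Hrz, HGzw, MV.
  assert (HGz0 : 0 <= Gz) by (rewrite HGz; nra).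
  assert (HGw0 : 0 <= Gw) by (rewrite HGw; nra).
  assert (Hq0 : 0 <= q) by (apply pow_le; lra).
  assert (Hspos : 0 <= s ^ S (2*k'+1)) by (apply pow_le; lra).
  assert (Hsr : s ^ S (2*k'+1) <= r * q) by (rewrite <- Hq; apply pow_incr; lra).
  assert (HGzq : Gz * q <= 4/3) by nra.
  set (K := INR (S k')) in *.
  replace (INR (S (2*k'+1))) with (2 * K) in MV
    by (unfold K; rewrite ?S_INR, ?plus_INR, ?mult_INR, ?S_INR; simpl; ring).
  assert (HD0 : 0 <= Gw - Gz) by (rewrite HGzw; apply Rmult_le_pos; [nra|lra]).
  assert (HD1 : Gw - Gz <= Gw * (Gz * q) * 2 * K * d).
  { rewrite HGzw. unfold d. 
    assert (0 <= Gw * Gz) by nra. 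
    apply Rle_trans with (Gw * Gz * (2 * K * q * (r - s))). apply Rmult_le_compat_l; lra.
    apply Req_le; ring. }
  assert (Hd0 : 0 < d) by (unfold d; lra).
  assert (HD2 : Gw - Gz <= 24 * K * d).
  { assert (Gw * (Gz * q) <= 9 * (4/3)).
    { apply Rmult_le_compat; nra. }
    assert (Gw * (Gz * q) * (2 * K * d) <= 9 * (4/3) * (2 * K * d)).
    { apply Rmult_le_compat_r; nra. }
    replace (Gw * (Gz * q) * 2 * K * d) with (Gw * (Gz * q) * (2 * K * d)) in HD1 by ring.
    lra. }
  assert (Hrs0 : r^2 - s^2 = (r+s)*d) by (unfold d; ring).
  assert (Hrs : 0 <= r^2 - s^2 <= 2 * d).
  { rewrite Hrs0. split. apply Rmult_le_pos; lra.
    apply Rmult_le_compat_r; lra. }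
  assert (Hac : 4 * (a - c) = (r^2 - s^2) + (Gw - Gz)).
  { rewrite HGz, HGw, Hr2, Hs2; ring. }
  assert (HKd : d <= K * d).
  { assert (0 <= (K - 1) * d) by (apply Rmult_le_pos; lra). lra. }
  assert (Hac2 : 0 <= a - c <= 7 * K * d) by lra.
  assert (Hr1 : r^2 <= 1) by (apply pow_le1; lra).
  assert (Hs1 : s^2 <= 1) by (apply pow_le1; lra).
  pose proof (pow2_ge_0 a). pose proof (pow2_ge_0 b).
  pose proof (pow2_ge_0 c). pose proof (pow2_ge_0 e).
  assert (Ha : a^2 <= 1) by lra. assert (Hc : c^2 <= 1) by lra.
  assert (Ha1 : Rabs a <= 1).
  { rewrite <- Rabs_R1. apply Rsqr_le_abs_0. unfold Rsqr. replace (1*1) with 1 by ring. replace (a*a) with (a^2) by ring. exact Ha. }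
  assert (Hc1 : Rabs c <= 1).
  { rewrite <- Rabs_R1. apply Rsqr_le_abs_0. unfold Rsqr. replace (1*1) with 1 by ring. replace (c*c) with (c^2) by ring. exact Hc. }
  assert (Hapc : Rabs (a + c) <= 2).
  { eapply Rle_trans. apply Rabs_triang. lra. }
  assert (Hbe2 : (b - e)^2 <= Rabs (b^2 - e^2)).
  { assert (Hab : Rabs (b-e) <= Rabs (b+e)).
    { apply Rsqr_le_abs_0. unfold Rsqr.
      assert ((b+e)*(b+e) - (b-e)*(b-e) = 4*(b*e)) by ring. lra. }
    replace (b^2 - e^2) with ((b-e)*(b+e)) by ring. rewrite Rabs_mult.
    replace ((b-e)^2) with (Rabs (b-e) * Rabs (b-e)).
    2:{ rewrite <- Rabs_mult. rewrite Rabs_pos_eq. ring. apply Rle_0_sqr. }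
    apply Rmult_le_compat_l. apply Rabs_pos. exact Hab. }
  assert (Hb2 : b^2 - e^2 = (r^2 - s^2) - (a - c) * (a + c)) by (rewrite Hr2, Hs2; ring).
  assert (HB : Rabs (b^2 - e^2) <= 2 * d + 2 * (a - c)).
  { rewrite Hb2. unfold Rminus at 1. eapply Rle_trans. apply Rabs_triang.
    rewrite Rabs_Ropp, Rabs_mult, (Rabs_pos_eq (r^2-s^2)), (Rabs_pos_eq (a - c)) by lra.
    assert ((a - c) * Rabs (a + c) <= (a - c) * 2) by (apply Rmult_le_compat_l; lra).
    lra. }
  assert (Hd1 : d <= 1) by (unfold d; lra).
  assert (HK0 : 0 <= K * d) by lra.
  assert (Hsq : (a - c)^2 <= (7 * K * d)^2) by (apply pow_incr; lra).
  assert (HKd2 : (7*K*d)^2 <= 49 * K^2 * d).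
  { replace ((7*K*d)^2) with (49 * K^2 * d * d) by ring.
    assert (0 <= 49 * K^2 * d) by (pose proof (pow2_ge_0 K); apply Rmult_le_pos; [apply Rmult_le_pos|]; lra).
    rewrite <- (Rmult_1_r (49 * K^2 * d)) at 2. apply Rmult_le_compat_l; lra. }
  assert (HKK : K * d <= K^2 * d).
  { replace (K^2*d) with (K * (K * d)) by ring.
    assert (0 <= (K - 1) * (K * d)) by (apply Rmult_le_pos; lra). lra. }
  lra.
Qed.

Lemma rel_mod (k : nat) (z : C) :
  Cmult (Cpow z k) (Cminus (RtoC 2) z) = RtoC 1 ->
  Cmod z ^ k * Cmod (Cminus (RtoC 2) z) = 1.
Proof.
  intro H. rewrite <- Cmod_pow, <- Cmod_mult, H, Cmod_1. reflexivity.
Qed.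

Lemma modk_ge (k : nat) (z : C) :
  Cmult (Cpow z k) (Cminus (RtoC 2) z) = RtoC 1 -> Cmod z <= 1 ->
  1/3 <= Cmod z ^ k.
Proof.
  intros H Hz. pose proof (rel_mod k z H). pose proof (Cmod_2m z).
  pose proof (pow_le (Cmod z) k (Cmod_ge_0 z)).
  pose proof (Cmod_ge_0 (Cminus (RtoC 2) z)). nra.
Qed.

Lemma sep (m : nat) (z w : C) : (1 <= m)%nat ->
  Cmult (Cpow z (S m)) (Cminus (RtoC 2) z) = RtoC 1 ->
  Cmult (Cpow w (S m)) (Cminus (RtoC 2) w) = RtoC 1 ->
  Cmod z <= 1 -> Cmod w <= 1 -> z <> w ->
  1 <= 3 * INR m * Cmod (Cminus z w).
Proof.
  intros Hm Hz Hw Hz1 Hw1 Hne. apply le_INR in Hm. simpl in Hm.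
  set (k := S m) in *.
  assert (L4 : Cminus (Cpow z k) (Cpow w k) =
     Cmult (Cmult (Cpow z k) (Cpow w k)) (Cminus z w)).
  { assert (E: Cmult (Cminus (RtoC 2) z) (Cminus (Cpow z k) (Cpow w k)) = Cmult (Cpow w k) (Cminus z w)).
    { transitivity (Cplus (Cmult (Cminus (RtoC 2) z) (Cminus (Cpow z k) (Cpow w k)))
          (Cminus (Cmult (Cpow w k) (Cminus (RtoC 2) w)) (Cmult (Cpow z k) (Cminus (RtoC 2) z)))).
      { rewrite Hz, Hw. ring. }
      ring. }
    transitivity (Cmult (Cmult (Cpow z k) (Cminus (RtoC 2) z)) (Cminus (Cpow z k) (Cpow w k))).
    { rewrite Hz. ring. }
    rewrite <- Cmult_assoc, E. ring. }
  pose proof (F_bound z w m Hz1 Hw1) as FB. fold k in FB.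
  rewrite L4 in FB.
  set (E := Cmult (Cmult (RtoC (INR k)) (Cpow z m)) (Cminus z w)) in FB.
  assert (Eq : E = Cminus (Cmult (Cmult (Cpow z k) (Cpow w k)) (Cminus z w))
      (Cminus (Cmult (Cmult (Cpow z k) (Cpow w k)) (Cminus z w)) E)) by ring.
  assert (HE : Cmod E <= Cmod (Cmult (Cmult (Cpow z k) (Cpow w k)) (Cminus z w)) + INR m ^ 2 * Cmod (Cminus z w) ^ 2).
  { rewrite Eq at 1. unfold Cminus at 1. eapply Rle_trans. apply Cmod_triangle.
    rewrite Cmod_opp. lra. }
  unfold E in HE. rewrite !Cmod_mult, !Cmod_pow, Cmod_R, Rabs_pos_eq in HE by apply pos_INR.
  assert (Hd : 0 < Cmod (Cminus z w)).
  { apply Cmod_gt_0. intro H0. apply Hne. 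
    replace z with (Cplus (Cminus z w) w) by ring. rewrite H0. ring. }
  set (d := Cmod (Cminus z w)) in *.
  pose proof (modk_ge k z Hz Hz1) as Hk3.
  unfold k in Hk3, HE. rewrite S_INR in HE. simpl in Hk3, HE.
  set (r := Cmod z) in *. set (s := Cmod w) in *.
  assert (0 <= r) by apply Cmod_ge_0. assert (0 <= s) by apply Cmod_ge_0.
  pose proof (pow_le r m ltac:(lra)). pose proof (pow_le1 s (S m) ltac:(lra)).
  pose proof (pow_le s (S m) ltac:(lra)). simpl in *.
  assert (r * r ^ m * (s * s ^ m) <= r ^ m) by nra.
  assert (INR m * r ^ m * d <= INR m ^ 2 * d ^ 2) by nra.
  pose proof (pos_INR m).
  assert (Hpos : 0 < INR m * d) by nra.
  assert (INR m * d * (r ^ m - INR m * d) <= 0) by nra.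
  assert (r ^ m <= INR m * d).
  { destruct (Rle_dec (r ^ m) (INR m * d)) as [|Hn]; [assumption|].
    exfalso. assert (0 < INR m * d * (r ^ m - INR m * d)) by (apply Rmult_lt_0_compat; lra). lra. }
  assert (r * r^m <= r^m) by nra. nra.
Qed.

Lemma core (k : nat) (z w : C) : (4 <= k)%nat ->
  Cmult (Cpow z k) (Cminus (RtoC 2) z) = RtoC 1 ->
  Cmult (Cpow w k) (Cminus (RtoC 2) w) = RtoC 1 ->
  Cmod z <= 1 -> Cmod w < Cmod z -> 0 <= Im z * Im w ->
  1 <= 585 * INR k ^ 4 * (Cmod z - Cmod w).
Proof.
  intros Hk Hz Hw Hz1 Hzw Hi.
  assert (Hw1 : Cmod w <= 1) by lra.
  destruct k as [|m]; [lia|].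
  assert (Hne : z <> w) by (intro E; rewrite E in Hzw; lra).
  pose proof (sep m z w ltac:(lia) Hz Hw Hz1 Hw1 Hne) as HS.
  assert (HmK : INR m <= INR (S m)) by (apply le_INR; lia).
  assert (HK4 : 4 <= INR (S m)) by (replace 4 with (INR 4) by (simpl; ring); apply le_INR; lia).
  set (K := INR (S m)) in *.
  set (dl := Cmod (Cminus z w)) in *.
  assert (0 <= dl) by apply Cmod_ge_0.
  assert (HS2 : 1 <= 9 * K^2 * dl^2).
  { assert (1 <= 3 * K * dl) by nra.
    assert (1 * 1 <= (3 * K * dl) * (3 * K * dl)) by (apply Rmult_le_compat; lra).
    nra. }
  pose proof (modk_ge (S m) z Hz Hz1) as H3.
  set (r := Cmod z) in *. set (s := Cmod w) in *.
  assert (0 <= r) by apply Cmod_ge_0. assert (0 <= s) by apply Cmod_ge_0.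
  assert (Hr34 : 3/4 <= r).
  { destruct (Rle_dec (3/4) r) as [|Hn]; [assumption|exfalso].
    replace (S m) with (4 + (S m - 4))%nat in H3 by lia.
    rewrite pow_add in H3.
    pose proof (pow_le1 r (S m - 4) ltac:(lra)).
    pose proof (pow_le r (S m - 4) ltac:(lra)).
    pose proof (pow_le r 4 ltac:(lra)).
    assert (r^4 <= (3/4)^4) by (apply pow_incr; lra).
    assert (r ^ 4 * r ^ (S m - 4) <= r^4) by nra.
    simpl in *. lra. }
  assert (Hs0 : 0 < s).
  { destruct (Rle_dec s 0) as [Hn|]; [|lra]. exfalso.
    assert (Hs00 : s = 0) by lra. pose proof (rel_mod (S m) w Hw) as Hm. fold s in Hm.
    rewrite Hs00 in Hm. simpl in Hm. lra. }
  destruct z as [a b]. destruct w as [c e].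
  pose proof (rel_mod _ _ Hz) as Mz. pose proof (rel_mod _ _ Hw) as Mw.
  fold r in Mz. fold s in Mw.
  pose proof (Cmod_2m (c, e)) as M2w. fold s in M2w.
  pose proof (Cmod2_alt (a,b)) as Er. pose proof (Cmod2_alt (c,e)) as Es.
  pose proof (Cmod2_alt (Cminus (RtoC 2) (a,b))) as Egz.
  pose proof (Cmod2_alt (Cminus (RtoC 2) (c,e))) as Egw.
  pose proof (Cmod2_alt (Cminus (a,b) (c,e))) as Ed.
  fold r in Er. fold s in Es. fold dl in Ed.
  cbn [fst snd Re Im Cminus Cplus Copp RtoC] in Er, Es, Egz, Egw, Ed, Hi.
  set (gz := Cmod (Cminus (RtoC 2) (a, b))) in *.
  set (gw := Cmod (Cminus (RtoC 2) (c, e))) in *.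
  assert (0 <= gw) by apply Cmod_ge_0.
  pose proof (geo (S m) r s a b c e (gz^2) (gw^2) ltac:(lia) ltac:(lra) ltac:(lra)
     ltac:(rewrite Er; ring) ltac:(rewrite Es; ring)
     ltac:(rewrite Egz; ring) ltac:(rewrite Egw; ring)
     ltac:(rewrite Nat.mul_comm, pow_mult, <- Rpow_mult_distr, Mz; ring)
     ltac:(rewrite Nat.mul_comm, pow_mult, <- Rpow_mult_distr, Mw; ring)
     ltac:(lra) ltac:(nra)) as HG.
  fold K in HG.
  replace ((a - c)^2 + (b - e)^2) with (dl^2) in HG by (rewrite Ed; unfold Rminus; ring).
  assert (0 <= 9 * K^2) by nra.
  assert (9 * K^2 * dl^2 <= 9 * K^2 * (65 * K^2 * (r - s))) by (apply Rmult_le_compat_l; lra).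
  nra.
Qed.

Lemma conj_rel (k : nat) (w : Complex.C) :
  Cmult (Cpow w k) (Cminus (RtoC 2) w) = RtoC 1 ->
  Cmult (Cpow (Cconj w) k) (Cminus (RtoC 2) (Cconj w)) = RtoC 1.
Proof.
  intro H. apply (f_equal Cconj) in H.
  rewrite Cmult_conj, Cpow_conj, Cminus_conj in H.
  replace (Cconj (RtoC 2)) with (RtoC 2) in H by (apply injective_projections; simpl; ring).
  rewrite H. apply injective_projections; simpl; ring.
Qed.

Theorem theorem1 (k : nat) (Hk : (4 <= k)%nat) (z w : C)
  (Hz : is_root_fk k z) (Hw : is_root_fk k w)
  (Hz1 : ~ (1 < Cmod z)) (Hw1 : ~ (1 < Cmod w))
  (Hzw : Cmod w < Cmod z) :
  Cmod z / Cmod w >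
    1 + 1 / (10 * Rpower (INR k) (96 / 10) * (PI / exp 1) ^ k).
Proof.
  apply root_rel in Hz. apply root_rel in Hw.
  assert (Hd : 1 <= 585 * INR k ^ 4 * (Cmod z - Cmod w)).
  { destruct (Rle_dec 0 (Im z * Im w)).
    - apply core; auto; lra.
    - rewrite <- (Cmod_conj w). apply core; auto. apply conj_rel; auto.
      lra. rewrite Cmod_conj; auto. rewrite im_conj. lra. }
  assert (HK4 : 4 <= INR k) by (replace 4 with (INR 4) by (simpl; ring); apply le_INR; lia).
  set (K := INR k) in *.
  set (r := Cmod z) in *. set (s := Cmod w) in *.
  assert (Hs0 : 0 < s).
  { destruct (Rle_dec s 0) as [Hn|]; [|lra]. exfalso.
    assert (Hs00 : s = 0) by (assert (0 <= s) by apply Cmod_ge_0; lra).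
    pose proof (rel_mod k w Hw) as Hm. fold s in Hm.
    rewrite Hs00, pow_i in Hm by lia. lra. }
  assert (Hs1 : s <= 1) by lra.
  assert (HP : K ^ 9 <= Rpower K (96/10)).
  { rewrite <- Rpower_pow by lra. apply Rle_Rpower. lra. simpl. lra. }
  assert (HQ : 1 <= (PI / exp 1) ^ k).
  { apply pow_R1_Rle. pose proof PI2_3_2. pose proof exp_le_3.
    pose proof (exp_pos 1).
    apply Rmult_le_reg_r with (exp 1); auto. unfold Rdiv. rewrite Rmult_assoc, Rinv_l by lra. lra. }
  assert (HK9 : 0 < K ^ 4) by (apply pow_lt; lra).
  assert (HK5 : 1024 <= K ^ 5).
  { replace 1024 with (4^5) by (simpl; ring). apply pow_incr; lra. }
  assert (HD : 585 * K^4 < 10 * Rpower K (96/10) * (PI / exp 1) ^ k).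
  { assert (10 * K^9 <= 10 * Rpower K (96/10)) by lra.
    assert (0 <= 10 * Rpower K (96/10)) by nra.
    assert (10 * Rpower K (96/10) * 1 <= 10 * Rpower K (96/10) * (PI / exp 1) ^ k)
      by (apply Rmult_le_compat_l; lra).
    assert (585 * K^4 < 10 * K^9).
    { replace (K^9) with (K^4 * K^5) by ring. nra. }
    lra. }
  assert (Hdpos : 0 < 585 * K^4) by lra.
  set (X := 10 * Rpower K (96 / 10) * (PI / exp 1) ^ k) in *.
  assert (Hinv : / X < / (585 * K^4)).
  { apply Rinv_lt_contravar; [apply Rmult_lt_0_compat|]; lra. }
  assert (Hd2 : / (585 * K^4) <= r - s).
  { apply Rmult_le_reg_l with (585 * K^4). lra. rewrite Rinv_r by lra. lra. }
  assert (Hsi : 1 <= / s).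
  { rewrite <- Rinv_1. apply Rinv_le_contravar; lra. }
  assert (E : r / s = 1 + (r - s) * / s) by (field; lra).
  unfold Rgt. rewrite E.
  assert ((r - s) * 1 <= (r - s) * / s) by (apply Rmult_le_compat_l; lra).
  unfold Rdiv. rewrite Rmult_1_l. lra.
Qed.
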